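(* In the finite-sum setting, assume $f$ is convex and $L$-smooth with minimizer $x^\ast$, and that $\tilde\nabla_1$ satisfies the strong growth condition with constant $\rho_1\ge1$. Let $K\in\{1,\dots,N\}$, $\bar\rho_K:=\frac{\rho_1(N-K)+(K-1)N}{K(N-1)}$, and run SNAG with batch size $K$ and parameters $s=\frac{1}{L\bar\rho_K}$, $\eta_n=\frac{1}{L\bar\rho_K^2}\frac{n+1}2$, $\beta=1$, $\alpha_n=\frac{n^2/(n+1)}{2+n^2/(n+1)}$. Then, with $\Delta_K:=\frac{N-K}{N-1}+\frac N{\rho_1}\frac{K-1}{N-1}$, we have $\mathbb{E}[f(x_n)-f^\ast]\le\varepsilon$ as soon as the number of component-gradient evaluations $nK$ satisfies $$nK\ge\Delta_K\,\rho_1\sqrt{\frac{2L}{\varepsilon}}\|x_0-x^\ast\|.$$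
   Context: Finite-sum setting: $N\ge2$, $f_i:\mathbb{R}^d\to\mathbb{R}$ continuously differentiable, $f=\frac1N\sum_if_i$, $f^\ast=\min f$. For $K\in\{1,\dots,N\}$, $B$ is a uniformly random subset of $\{1,\dots,N\}$ of size $K$ and $\tilde\nabla_K(x)=\frac1K\sum_{i\in B}\nabla f_i(x)$; each iteration with batch size $K$ evaluates $K$ gradients $\nabla f_i$. Strong growth condition with constant $\rho_K\ge 1$: $\mathbb{E}\|\tilde\nabla_K(x)\|^2\le\rho_K\|\nabla f(x)\|^2$ for all $x$. SNAG: $x_0=z_0$; $y_n=\alpha_nx_n+(1-\alpha_n)z_n$, $x_{n+1}=y_n-s\tilde\nabla_K(y_n)$, $z_{n+1}=\beta z_n+(1-\beta)y_n-\eta_n\tilde\nabla_K(y_n)$, same batch in both updates of an iteration, independent batches across iterations. *)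

(* Defs.v *)
From HB Require Import structures.
From mathcomp Require Import all_boot all_order all_algebra.
From mathcomp Require Import all_classical all_reals all_analysis.
Set Implicit Arguments. Unset Strict Implicit. Unset Printing Implicit Defensive.
Import Order.TTheory GRing.Theory Num.Theory.
Import numFieldNormedType.Exports.
Local Open Scope ring_scope.

Section Defs.
Variable R : realType.
Variable d : nat.
Notation vec := 'rV[R]_d.

Definition dot (u v : vec) : R := \sum_(i < d) u 0 i * v 0 i.
Definition enorm (u : vec) : R := Num.sqrt (dot u u).

Definition is_gradient (f : vec -> R) (g : vec -> vec) : Prop :=
  forall x : vec, differentiable f x /\ forall v : vec, 'd f x v = dot (g x) v.

Definition convex_fun (f : vec -> R) : Prop :=
  forall (x y : vec) (t : R), 0 <= t -> t <= 1 ->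
    f (t *: x + (1 - t) *: y) <= t * f x + (1 - t) * f y.

Definition lipschitz_grad (L : R) (g : vec -> vec) : Prop :=
  forall x y : vec, enorm (g x - g y) <= L * enorm (x - y).

Variable N : nat.

Definition favg (F : 'I_N -> vec -> R) (x : vec) : R :=
  N%:R^-1 * \sum_(i < N) F i x.
Definition gavg (G : 'I_N -> vec -> vec) (x : vec) : vec :=
  N%:R^-1 *: \sum_(i < N) G i x.

Definition batch_grad (G : 'I_N -> vec -> vec) (K : nat) (B : {set 'I_N})
  (x : vec) : vec := K%:R^-1 *: \sum_(i in B) G i x.

(* Strong growth condition for the single-sample estimator (K = 1):
   E ||grad f_i(x)||^2 <= rho ||grad f(x)||^2, i uniform in {1..N}. *)
Definition strong_growth1 (G : 'I_N -> vec -> vec) (rho : R) : Prop :=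
  forall x : vec,
    N%:R^-1 * \sum_(i < N) enorm (G i x) ^+ 2 <= rho * enorm (gavg G x) ^+ 2.

Fixpoint snag (G : 'I_N -> vec -> vec) (K : nat) (s beta : R)
  (alpha eta : nat -> R) (x0 : vec) (bs : nat -> {set 'I_N}) (n : nat)
  : vec * vec :=
  match n with
  | 0 => (x0, x0)
  | m.+1 =>
      let: (x, z) := snag G K s beta alpha eta x0 bs m in
      let y := alpha m *: x + (1 - alpha m) *: z in
      let gy := batch_grad G K (bs m) y in
      (y - s *: gy, beta *: z + (1 - beta) *: y - eta m *: gy)
  end.

Definition batch_ok (K : nat) (t : seq {set 'I_N}) : bool :=
  all (fun B : {set 'I_N} => #|B| == K) t.

(* Expectation over n independent uniformly random K-subsets:
   the uniform average over all n-tuples of K-subsets. *)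
Definition Exp_batches (K n : nat) (phi : (nat -> {set 'I_N}) -> R) : R :=
  (\sum_(t : n.-tuple {set 'I_N} | batch_ok K t) phi (fun j => nth (finset.set0 : {set 'I_N}) (tval t) j))
  / #|[set t : n.-tuple {set 'I_N} | batch_ok K t]|%:R.

End Defs.

(* Main.v *)
Require Import Defs.
From HB Require Import structures.
From mathcomp Require Import all_boot all_order all_algebra.
From mathcomp Require Import all_classical all_reals all_analysis.
From mathcomp Require Import ring lra.
From mathcomp Require fingroup perm.
Set Implicit Arguments. Unset Strict Implicit. Unset Printing Implicit Defensive.
Import Order.TTheory GRing.Theory Num.Theory.
Import numFieldNormedType.Exports.
Local Open Scope ring_scope.
Module CombPerm.
Import fingroup.fingroup perm.

Section Comb.
Variables (R : realType) (N K : nat).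

Definition cnt (i j : 'I_N) : R :=
  \sum_(B : {set 'I_N} | #|B| == K) ((i \in B) && (j \in B))%:R.

Lemma cnt_perm (s : {perm 'I_N}) i j : cnt (s i) (s j) = cnt i j.
Proof.
rewrite /cnt (reindex (fun B : {set 'I_N} => s @: B)) /=; last first.
  exists (fun B : {set 'I_N} => (s^-1)%g @: B) => B _.
  - by rewrite -imset_comp (eq_imset _ (permK s)) imset_id.
  - by rewrite -imset_comp (eq_imset _ (permKV s)) imset_id.
apply: eq_big => B; first by rewrite card_imset //; exact: perm_inj.
by move=> _; rewrite !mem_imset //; exact: perm_inj.
Qed.

Lemma cnt_diag i j : cnt i i = cnt j j.
Proof. by rewrite -(cnt_perm (tperm i j)) tpermL. Qed.

Lemma cnt_off i j i' j' : i != j -> i' != j' -> cnt i j = cnt i' j'.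
Proof.
move=> ij ij'.
pose t := tperm i i'.
have tj : t j != i'.
  by rewrite -(tpermL i i') -/t (inj_eq perm_inj) eq_sym.
pose u := tperm (t j) j'.
have ui : u i' = i'.
  by rewrite /u tpermD // eq_sym.
have uj : u (t j) = j' by rewrite /u tpermL.
rewrite -(cnt_perm t) -(cnt_perm u) /t tpermL -/t ui uj.
done.
Qed.

End Comb.

End CombPerm.
Import CombPerm.

Section Dot.
Variables (R : realType) (d : nat).
Implicit Types u v w : 'rV[R]_d.

Lemma dotC u v : dot u v = dot v u.
Proof. by apply: eq_bigr => i _; rewrite mulrC. Qed.
Lemma dotDl u v w : dot (u + v) w = dot u w + dot v w.
Proof. by rewrite /dot -big_split; apply: eq_bigr => i _; rewrite !mxE mulrDl. Qed.
Lemma dotDr u v w : dot w (u + v) = dot w u + dot w v.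
Proof. by rewrite dotC dotDl !(dotC w). Qed.
Lemma dotZl a u v : dot (a *: u) v = a * dot u v.
Proof. by rewrite /dot mulr_sumr; apply: eq_bigr => i _; rewrite !mxE mulrA. Qed.
Lemma dotZr a u v : dot v (a *: u) = a * dot v u.
Proof. by rewrite dotC dotZl dotC. Qed.
Lemma dot0l u : dot 0 u = 0.
Proof. by rewrite /dot big1 // => i _; rewrite mxE mul0r. Qed.
Lemma dotNl u v : dot (- u) v = - dot u v.
Proof. by rewrite -scaleN1r dotZl mulN1r. Qed.
Lemma dotNr u v : dot v (- u) = - dot v u.
Proof. by rewrite dotC dotNl dotC. Qed.
Lemma dotBl u v w : dot (u - v) w = dot u w - dot v w.
Proof. by rewrite dotDl dotNl. Qed.
Lemma dotBr u v w : dot w (u - v) = dot w u - dot w v.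
Proof. by rewrite dotDr dotNr. Qed.
Lemma dot_suml (I : finType) (P : pred I) (F : I -> 'rV[R]_d) w :
  dot (\sum_(i | P i) F i) w = \sum_(i | P i) dot (F i) w.
Proof. by apply: (big_morph (fun x => dot x w)) => [x y|]; rewrite ?dotDl ?dot0l. Qed.
Lemma dot_sumr (I : finType) (P : pred I) (F : I -> 'rV[R]_d) w :
  dot w (\sum_(i | P i) F i) = \sum_(i | P i) dot w (F i).
Proof. by rewrite dotC dot_suml; apply: eq_bigr => i _; rewrite dotC. Qed.
Lemma dot_ge0 u : 0 <= dot u u.
Proof. by apply: sumr_ge0 => i _; rewrite -expr2 sqr_ge0. Qed.
Lemma enorm_sq u : enorm u ^+ 2 = dot u u.
Proof. by rewrite /enorm sqr_sqrtr // dot_ge0. Qed.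
Lemma enorm_ge0 u : 0 <= enorm u.
Proof. exact: sqrtr_ge0. Qed.
Lemma dot_eq0 u : dot u u = 0 -> u = 0.
Proof.
move=> /eqP; rewrite psumr_eq0 => [/allP H|i _]; last by rewrite -expr2 sqr_ge0.
apply/matrixP => i j; rewrite !mxE (ord1 i).
have := H j (mem_index_enum j); rewrite implyTb -expr2 sqrf_eq0 => /eqP //.
Qed.
Lemma dot_amgm l u v : 0 < l -> 2 * dot u v <= l * dot u u + l^-1 * dot v v.
Proof.
move=> l0; rewrite /dot !mulr_sumr -big_split /= ler_sum // => i _.
have -> : l * (u 0 i * u 0 i) + l^-1 * (v 0 i * v 0 i) =
   2 * (u 0 i * v 0 i) + l^-1 * (l * u 0 i - v 0 i) ^+ 2.
  by field; rewrite gt_eqF.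
by rewrite lerDl mulr_ge0 ?sqr_ge0 // invr_ge0 ltW.
Qed.
End Dot.

Section Comb2.
Variables (R : realType) (N K : nat).
Notation cnt := (@cnt R N K).
Definition Msum : R := \sum_(B : {set 'I_N} | #|B| == K) 1.

Lemma sum_ind (B : {set 'I_N}) : \sum_i ((i \in B)%:R : R) = #|B|%:R.
Proof.
rewrite -sum1_card natr_sum [RHS]big_mkcond /=; apply: eq_bigr => i _.
by case: (i \in B).
Qed.

Lemma sum_diag : \sum_i cnt i i = K%:R * Msum.
Proof.
rewrite /cnt /Msum exchange_big /= mulr_sumr; apply: eq_bigr => B /eqP HB.
under eq_bigr do rewrite andbb.
by rewrite sum_ind HB mulr1.
Qed.

Lemma sum_all : \sum_i \sum_j cnt i j = K%:R ^+ 2 * Msum.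
Proof.
rewrite /cnt /Msum.
under eq_bigr do rewrite exchange_big /=.
rewrite exchange_big /= mulr_sumr; apply: eq_bigr => B /eqP HB.
under eq_bigr do under eq_bigr do rewrite -mulnb natrM.
rewrite -big_distrlr /= sum_ind HB mulr1 expr2 //.
Qed.

End Comb2.
Section Comb3.
Variables (R : realType) (N K : nat).
Notation cnt := (@cnt R N K).
Notation Msum := (@Msum R N K).
Variables (i0 j0 : 'I_N).
Hypothesis ij0 : i0 != j0.

Lemma sum_c1 : N%:R * cnt i0 i0 = K%:R * Msum.
Proof.
rewrite -sum_diag; under [RHS]eq_bigr do rewrite (cnt_diag R K _ i0).
by rewrite sumr_const card_ord mulr_natl.
Qed.

Lemma sum_c2 : N%:R * (N.-1)%:R * cnt i0 j0 = (K%:R ^+ 2 - K%:R) * Msum.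
Proof.
have E : forall i, \sum_j cnt i j - cnt i i = (N.-1)%:R * cnt i0 j0.
  move=> i; rewrite (bigD1 i) //= addrC addrK.
  rewrite (eq_bigr (fun _ => cnt i0 j0)); last first.
    by move=> j ji; apply: cnt_off; rewrite // eq_sym.
  by rewrite (eq_bigl (fun j => j \in predC1 i)) // sumr_const cardC1 card_ord mulr_natl.
rewrite mulrBl -sum_all -sum_diag -sumrB.
rewrite (eq_bigr (fun _ => (N.-1)%:R * cnt i0 j0)) => [|i _]; last exact: E.
rewrite sumr_const card_ord; ring.
Qed.
End Comb3.
Section Comb4.
Variables (R : realType) (d N K : nat).
Notation cnt := (@cnt R N K).
Notation Msum := (@Msum R N K).
Implicit Types (v : 'I_N -> 'rV[R]_d) (w : 'rV[R]_d).

Lemma sum_in (B : {set 'I_N}) (x : 'I_N -> R) :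
  \sum_(i in B) x i = \sum_i (i \in B)%:R * x i.
Proof. by rewrite big_mkcond; apply: eq_bigr => i _; case: (i \in B); rewrite ?mul1r ?mul0r. Qed.

Lemma V1 v w : \sum_(B : {set 'I_N} | #|B| == K) dot (\sum_(i in B) v i) w
  = \sum_i cnt i i * dot (v i) w.
Proof.
under eq_bigr do rewrite dot_suml sum_in.
rewrite exchange_big /=; apply: eq_bigr => i _.
by rewrite /cnt mulr_suml; apply: eq_bigr => B _; rewrite andbb.
Qed.

Lemma V2 v : \sum_(B : {set 'I_N} | #|B| == K)
   dot (\sum_(i in B) v i) (\sum_(i in B) v i)
  = \sum_i \sum_j cnt i j * dot (v i) (v j).
Proof.
under eq_bigr do rewrite dot_suml sum_in; under eq_bigr do under eq_bigr do rewrite dot_sumr sum_in mulr_sumr.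
rewrite exchange_big /=; apply: eq_bigr => i _.
rewrite exchange_big /=; apply: eq_bigr => j _.
rewrite /cnt mulr_suml; apply: eq_bigr => B _.
by rewrite mulrA -natrM mulnb.
Qed.

Variables (i0 j0 : 'I_N).
Hypothesis ij0 : i0 != j0.

Lemma V2' v : \sum_i \sum_j cnt i j * dot (v i) (v j) =
  cnt i0 i0 * \sum_i dot (v i) (v i) + cnt i0 j0 *
    (\sum_i \sum_j dot (v i) (v j) - \sum_i dot (v i) (v i)).
Proof.
rewrite mulr_sumr -sumrB mulr_sumr -big_split /=; apply: eq_bigr => i _.
rewrite (bigD1 i) //= (bigD1 i (P := predT)) //= (addrC (dot (v i) (v i))) addrK.
rewrite (cnt_diag R K i i0) [RHS]addrC addrC; congr (_ + _).
rewrite mulr_sumr; apply: eq_bigr => j ji.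
by rewrite (cnt_off R K (i' := i0) (j' := j0)) // eq_sym.
Qed.
End Comb4.
Section Comb5.
Variables (R : realType) (d N K : nat).
Notation cnt := (@cnt R N K).
Notation Msum := (@Msum R N K).
Implicit Types (v : 'I_N -> 'rV[R]_d) (w : 'rV[R]_d).
Hypothesis N2 : (2 <= N)%N.
Hypothesis K1 : (1 <= K <= N)%N.

Lemma Msum_gt0 : 0 < Msum.
Proof.
rewrite /Msum (eq_bigl (fun B => B \in [set B : {set 'I_N} | #|B| == K])); last first.
  by move=> B; rewrite inE.
rewrite sumr_const card_draws card_ord -[X in 0 < X]mulr_natl mulr1 ltr0n bin_gt0.
by case/andP: K1.
Qed.

Let i0 : 'I_N := Ordinal (ltn_trans (ltnSn 0) N2).
Let j0 : 'I_N := Ordinal N2.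
Let ij0 : i0 != j0. Proof. by []. Qed.

Lemma c1E : cnt i0 i0 = K%:R * Msum / N%:R.
Proof.
have N0 : N%:R != 0 :> R by rewrite pnatr_eq0 -lt0n (ltn_trans _ N2).
by rewrite -(@sum_c1 R N K i0) mulrC mulKf.
Qed.

Lemma c2E : cnt i0 j0 = (K%:R ^+ 2 - K%:R) * Msum / (N%:R * (N.-1)%:R).
Proof.
have N0 : N%:R * N.-1%:R != 0 :> R.
  by rewrite mulf_neq0 // pnatr_eq0 -lt0n; [exact: (ltn_trans _ N2)| case: N N2 => [|[]]].
by rewrite -(@sum_c2 R N K i0 j0 ij0) mulrC mulKf.
Qed.

Definition bat v (B : {set 'I_N}) := K%:R^-1 *: \sum_(i in B) v i.
Definition vbar v := N%:R^-1 *: \sum_i v i.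

Lemma batch_mean v w :
  Msum^-1 * \sum_(B : {set 'I_N} | #|B| == K) dot (bat v B) w = dot (vbar v) w.
Proof.
under eq_bigr do rewrite /bat dotZl.
rewrite -mulr_sumr V1.
under eq_bigr => i _ do rewrite (cnt_diag R K i i0) c1E.
rewrite -mulr_sumr /vbar dotZl dot_suml.
have N0 : N%:R != 0 :> R by rewrite pnatr_eq0 -lt0n (ltn_trans _ N2).
have K0 : K%:R != 0 :> R by rewrite pnatr_eq0 -lt0n; case/andP: K1.
have M0 : Msum != 0 by rewrite gt_eqF // Msum_gt0.
by field; rewrite N0 K0 M0.
Qed.
End Comb5.
Section RV.
Variable R : realType.
Lemma real_var (n k m S P rho : R) : 2 <= n -> 1 <= k -> k <= n -> 0 < m ->
  n^-1 * S <= rho * P ->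
  m^-1 * (k^-1 * (k^-1 * (k * m / n * S + (k ^+ 2 - k) * m / (n * (n - 1)) * (n ^+ 2 * P - S))))
  <= (rho * (n - k) + (k - 1) * n) / (k * (n - 1)) * P.
Proof.
move=> n2 k1 kn m0 H.
have n0 : n != 0 by rewrite gt_eqF // (lt_le_trans _ n2).
have n1 : n - 1 != 0 by rewrite gt_eqF // subr_gt0 (lt_le_trans _ n2) // ltr1n.
have k0 : k != 0 by rewrite gt_eqF // (lt_le_trans _ k1).
have m0' : m != 0 by rewrite gt_eqF.
rewrite -subr_ge0.
have -> : (rho * (n - k) + (k - 1) * n) / (k * (n - 1)) * P -
  m^-1 * (k^-1 * (k^-1 * (k * m / n * S + (k ^+ 2 - k) * m / (n * (n - 1)) * (n ^+ 2 * P - S))))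
  = (n - k) * (rho * n * P - S) / (k * n * (n - 1)).
  by field; rewrite n0 n1 k0 m0'.
have ng : 0 < n by rewrite (lt_le_trans _ n2).
have kp : 0 < k by lra.
have n1p : 0 < n - 1 by lra.
apply: divr_ge0; last by rewrite ltW // !mulr_gt0.
apply: mulr_ge0; first by rewrite subr_ge0.
have HS : S <= n * (rho * P) by rewrite -[S](mulVKf n0) ler_wpM2l // ltW.
lra.
Qed.
End RV.

Section Comb6.
Variables (R : realType) (d N K : nat).
Notation cnt := (@cnt R N K).
Notation Msum := (@Msum R N K).
Implicit Types (v : 'I_N -> 'rV[R]_d) (w : 'rV[R]_d).
Hypothesis N2 : (2 <= N)%N.
Hypothesis K1 : (1 <= K <= N)%N.

Lemma batch_var v rho1 :
  N%:R^-1 * \sum_i dot (v i) (v i) <= rho1 * dot (vbar v) (vbar v) ->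
  Msum^-1 * \sum_(B : {set 'I_N} | #|B| == K) dot (bat K v B) (bat K v B) <=
  (rho1 * (N - K)%:R + (K - 1)%:R * N%:R) / (K%:R * (N - 1)%:R) * dot (vbar v) (vbar v).
Proof.
move=> H.
pose i0 : 'I_N := Ordinal (ltn_trans (ltnSn 0) N2).
pose j0 : 'I_N := Ordinal N2.
have ij0 : i0 != j0 by [].
under eq_bigr do rewrite /bat dotZl dotZr.
rewrite -!mulr_sumr V2 (V2' K ij0) (c1E R K N2) (c2E R K N2).
have TP : \sum_i \sum_j dot (v i) (v j) = N%:R ^+ 2 * dot (vbar v) (vbar v).
  have N0 : N%:R != 0 :> R by rewrite pnatr_eq0 -lt0n (ltn_trans _ N2).
  transitivity (dot (\sum_i v i) (\sum_i v i)).
    by rewrite dot_suml; apply: eq_bigr => i _; rewrite dot_sumr.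
  by rewrite /vbar dotZl dotZr; field.
rewrite TP.
case/andP: K1 => K1' KN.
have -> : (N.-1)%:R = (N - 1)%:R :> R by rewrite subn1.
rewrite !natrB //; last exact: (ltn_trans _ N2).
apply: real_var => //; rewrite ?ler1n ?ler_nat // Msum_gt0 //.
Qed.
End Comb6.
Section P4s.
Local Open Scope classical_set_scope.

Lemma qd (R : realType) (c k t : R) : is_derive t 1 (fun s : R => s * c + s ^+ 2 * k) (c + 2 * t * k).
Proof.
have -> : (fun s : R => s * c + s ^+ 2 * k) = (id * cst c) + (id ^+ 2 * cst k) by [].
apply: is_derive_eq.
rewrite !scaler0 !add0r /=.
change (c * 1 + k * ((2 * t ^+ 1) * 1) = c + 2 * t * k); rewrite expr1; ring.
Qed.

Lemma right_of_dnbhs (R : realType) (q : R -> R) (l : R) :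
  q x @[x --> 0^'] --> l -> q x @[x --> 0^'+] --> l.
Proof.
move=> H; apply: cvg_trans H.
move=> A [e /= e0 He]; exists e => //= u ue u0.
by apply: He => //; rewrite gt_eqF.
Qed.

Lemma le_lim_right (R : realType) (q : R -> R) (l c : R) :
  q x @[x --> 0^'] --> l -> (forall u, 0 < u < 1 -> q u <= c) -> l <= c.
Proof.
move=> /right_of_dnbhs H Hc.
apply: (cvgr_to_le H).
near=> u; apply: Hc; apply/andP; split.
  near: u; exact: nbhs_right_gt.
near: u; exact: nbhs_right_lt.
Unshelve. all: by end_near.
Qed.

Section Anal.
Variables (R : realType) (d : nat).
Variables (f : 'rV[R]_d -> R) (g : 'rV[R]_d -> 'rV[R]_d).
Hypothesis fD : forall x h, derivable f x h /\ 'D_h f x = dot (g x) h.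

Lemma line_deriv (y h : 'rV[R]_d) (t : R) :
  derivable (fun s : R => f (s *: h + y)) t 1 /\
  'D_1 (fun s : R => f (s *: h + y)) t = dot (g (t *: h + y)) h.
Proof.
have E : (fun u : R => u^-1 *: (((fun s : R => f (s *: h + y)) \o shift t) (u *: 1)
     - f (t *: h + y))) =
   (fun u : R => u^-1 *: ((f \o shift (t *: h + y)) (u *: h) - f (t *: h + y))).
  apply: funext => u /=; congr (_ *: (f _ - _)).
  by rewrite scalerDl addrA; congr (_ *: _ + _ + _); rewrite /GRing.scale /= mulr1.
have [D1 D2] := fD (t *: h + y) h.
by rewrite /derivable /derive E; split.
Qed.

Lemma descent (L : R) : 0 < L ->
  (forall x y, enorm (g x - g y) <= L * enorm (x - y)) ->
  forall y h, f (h + y) <= f y + dot (g y) h + L / 2 * dot h h.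
Proof.
move=> L0 Lip y h.
set c := dot (g y) h; set k := L / 2 * dot h h.
pose phi := fun s : R => f (s *: h + y).
pose q := fun s : R => s * c + s ^+ 2 * k.
pose psi : R -> R := phi - q.
have dpsi1 : forall t : R, derivable psi t 1.
  move=> t; have [d1 e1] := line_deriv y h t.
  have qt := qd c k t.
  have dq : derivable q t 1 by exact: ex_derive.
  exact: derivableB.
have dpsi2 : forall t : R,
    'D_1 psi t = dot (g (t *: h + y)) h - (c + 2 * t * k).
  move=> t; have [d1 e1] := line_deriv y h t.
  have qt := qd c k t.
  have dq : derivable q t 1 by exact: ex_derive.
  by rewrite deriveB // e1 derive_val.
have key : forall t : R, t \in `]0, 1[%R -> psi^`() t <= 0.
  move=> t; rewrite in_itv /= => /andP[t0 t1].
  rewrite derive1E dpsi2 /c opprD addrA -dotBl.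
  set a := g (t *: h + y) - g y.
  have Ha : enorm a <= L * enorm (t *: h).
    by have := Lip (t *: h + y) y; rewrite addrK.
  have Ha2 : dot a a <= L ^+ 2 * t ^+ 2 * dot h h.
    have -> : L ^+ 2 * t ^+ 2 * dot h h = (L * enorm (t *: h)) ^+ 2.
      by rewrite exprMn enorm_sq dotZl dotZr; ring.
    by rewrite -enorm_sq !expr2 ler_pM // enorm_ge0.
  have lt0 : 0 < L * t by rewrite mulr_gt0.
  have H := dot_amgm h a lt0.
  have H2 : (L * t)^-1 * dot a a <= L * t * dot h h.
    have il : 0 <= (L * t)^-1 by rewrite invr_ge0 ltW.
    apply: (le_trans (ler_wpM2l il Ha2)).
    suff -> : (L * t)^-1 * (L ^+ 2 * t ^+ 2 * dot h h) = L * t * dot h h by [].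
    by field; rewrite !gt_eqF.
  rewrite subr_le0 /k dotC.
  have hh := dot_ge0 h.
  nra.
have cont : {within `[0, 1], continuous psi}.
  by apply: derivable_within_continuous => t _; exact: dpsi1 t.
have := ler0_derive1_le_cc (fun t _ => dpsi1 t) key cont.
move=> /(_ 1 0); rewrite !in_itv /= !lexx ler01 => /(_ isT isT isT).
change (f (1 *: h + y) - (1 * c + 1 ^+ 2 * k) <= f (0 *: h + y) - (0 * c + 0 ^+ 2 * k) -> f (h + y) <= f y + c + k).
rewrite scale0r scale1r add0r.
rewrite !mul0r expr0n /= mul0r addr0 subr0 mul1r expr1n mul1r => H.
rewrite -addrA; lra.
Qed.

Lemma conv_first : convex_fun f -> forall x y, f y + dot (g y) (x - y) <= f x.
Proof.
move=> cf x y.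
have [D1 D2] := fD y (x - y).
rewrite -lerBrDl -D2.
apply: le_lim_right; first exact: D1.
move=> u /andP[u0 u1] /=.
rewrite ler_pdivrMl // mulrBr.
have -> : u *: (x - y) + y = u *: x + (1 - u) *: y.
  by rewrite scalerBr scalerBl scale1r -addrA (addrC (- _)).
have := cf x y u (ltW u0) (ltW u1).
change (u *: (f x - f y)) with (u * (f x - f y)).
lra.
Qed.
End Anal.

End P4s.

Section Expect.
Variables (R : realType) (N K : nat).
Local Notation set_ := {set 'I_N}.
Definition nthf n (t : n.-tuple set_) : nat -> set_ := fun j => nth finset.set0 (tval t) j.
Definition Sb n (phi : (nat -> set_) -> R) : R :=
  \sum_(t : n.-tuple set_ | batch_ok K t) phi (nthf t).
Definition ext n (bs : nat -> set_) (B : set_) : nat -> set_ :=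
  fun j => if (j < n)%N then bs j else if j == n then B else finset.set0.

Lemma nthf_rcons n (t : n.-tuple set_) B : nthf [tuple of rcons t B] = ext n (nthf t) B.
Proof. by apply: funext => j; rewrite /nthf /ext /= nth_rcons size_tuple. Qed.

Lemma Sb_S n phi : Sb n.+1 phi =
  Sb n (fun bs => \sum_(B : set_ | #|B| == K) phi (ext n bs B)).
Proof.
rewrite /Sb (reindex (fun p : n.-tuple set_ * set_ => [tuple of rcons p.1 p.2])) /=; last first.
  exists (fun t : n.+1.-tuple set_ =>
    ([tuple of belast (thead t) (behead t)], last (thead t) (behead t))).
  - move=> [t B] _ /=.
    have E : rcons (belast (thead [tuple of rcons t B]) (behead [tuple of rcons t B]))
                   (last (thead [tuple of rcons t B]) (behead [tuple of rcons t B]))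
             = rcons t B.
      by rewrite -lastI -[RHS]/(tval [tuple of rcons t B]) [in RHS](tuple_eta [tuple of rcons t B]).
    have [E1 E2] := rcons_inj E.
    by congr (_, _) => //; apply: val_inj.
  - move=> t _ /=; apply: val_inj => /=.
    by rewrite -lastI [in RHS](tuple_eta t).
rewrite (eq_bigl (fun p : n.-tuple set_ * set_ => batch_ok K p.1 && (#|p.2| == K))); last first.
  by move=> [t B]; rewrite /batch_ok /= all_rcons andbC.
rewrite -(pair_big_dep (fun t : n.-tuple set_ => batch_ok K t) (fun _ (B : set_) => #|B| == K)
   (fun t (B : set_) => phi (nthf [tuple of rcons t B]))) /=.
by apply: eq_bigr => t _; apply: eq_bigr => B _; rewrite nthf_rcons.
Qed.

Lemma Sb_0 phi : Sb 0 phi = phi (fun _ => finset.set0).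
Proof.
rewrite /Sb (big_pred1 [tuple]); last first.
  move=> t; rewrite [t]tuple0.
  rewrite /batch_ok /=; by apply/esym/eqP.
by congr phi; apply: funext => j; rewrite /nthf /= nth_nil.
Qed.

Lemma Sb_scale n c phi : Sb n (fun bs => c * phi bs) = c * Sb n phi.
Proof. by rewrite /Sb mulr_sumr. Qed.

Lemma Sb_const n c : Sb n (fun _ => c) = c * Sb n (fun _ => 1).
Proof. by rewrite /Sb mulr_sumr; apply: eq_bigr => t _; rewrite mulr1. Qed.

Lemma Sb_le n phi psi : (forall bs, phi bs <= psi bs) -> Sb n phi <= Sb n psi.
Proof. by move=> H; rewrite /Sb ler_sum. Qed.

Lemma card_Sb n : (#|[set t : n.-tuple set_ | batch_ok K t]|)%:R = Sb n (fun _ => 1).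
Proof.
rewrite /Sb -sum1_card natr_sum; apply: eq_bigl => t; by rewrite inE.
Qed.

Hypothesis N2 : (2 <= N)%N.
Hypothesis K1 : (1 <= K <= N)%N.

Lemma Sb1_gt0 n : 0 < Sb n (fun _ => 1).
Proof.
elim: n => [|n IH]; first by rewrite Sb_0 ltr01.
rewrite Sb_S; change (0 < Sb n (fun _ => Msum R N K)).
by rewrite Sb_const mulr_gt0 // Msum_gt0.
Qed.

Lemma ExpE n phi : Exp_batches K n phi = Sb n phi / Sb n (fun _ => 1).
Proof. by rewrite /Exp_batches card_Sb. Qed.

Lemma Exp_S n phi : Exp_batches K n.+1 phi =
  Exp_batches K n (fun bs => (Msum R N K)^-1 *
     \sum_(B : set_ | #|B| == K) phi (ext n bs B)).
Proof.
rewrite !ExpE !Sb_S Sb_scale.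
change (Sb n (fun bs => \sum_(B : set_ | #|B| == K) phi (ext n bs B)) /
  Sb n (fun _ => Msum R N K) = (Msum R N K)^-1 *
  Sb n (fun bs => \sum_(B : set_ | #|B| == K) phi (ext n bs B)) / Sb n (fun _ => 1)).
rewrite Sb_const.
have M0 : Msum R N K != 0 by rewrite gt_eqF // Msum_gt0.
have C0 : Sb n (fun _ => 1) != 0 by rewrite gt_eqF // Sb1_gt0.
by field; rewrite M0 C0.
Qed.

Lemma Exp_le n (phi psi : (nat -> set_) -> R) : (forall bs, phi bs <= psi bs) ->
  Exp_batches K n phi <= Exp_batches K n psi.
Proof.
move=> H; rewrite !ExpE ler_wpM2r ?Sb_le // invr_ge0 ltW // Sb1_gt0 //.
Qed.

Lemma Exp_scale n (c : R) (phi : (nat -> set_) -> R) : Exp_batches K n (fun bs => c * phi bs) = c * Exp_batches K n phi.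
Proof. by rewrite !ExpE Sb_scale mulrA. Qed.

Lemma Exp_0 (phi : (nat -> set_) -> R) : Exp_batches K 0 phi = phi (fun _ => finset.set0).
Proof. by rewrite ExpE !Sb_0 divr1. Qed.
End Expect.

Section Scalar.
Variable R : realType.
Lemma scalar_step (L r nn fy fx fs p q r0 P E Z : R) :
  0 < L -> 0 < r -> 0 <= nn -> fs <= fy -> E <= r * P ->
  let al := (nn ^+ 2 / (nn + 1)) / (2 + nn ^+ 2 / (nn + 1)) in
  let yv := al * p + (1 - al) * q in
  fy + (p - yv) <= fx ->
  fy + (r0 - yv) <= fs ->
  (nn + 1) ^+ 2 * (4 * L * r ^+ 2)^-1 *
     (fy - fs - (L * r)^-1 * P + L / 2 * (L * r)^-1 ^+ 2 * E)
  + 1/2 * (Z - 2 * ((L * r ^+ 2)^-1 * ((nn + 1) / 2)) * (q - r0)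
           + ((L * r ^+ 2)^-1 * ((nn + 1) / 2)) ^+ 2 * E)
  <= nn ^+ 2 * (4 * L * r ^+ 2)^-1 * (fx - fs) + 1/2 * Z.
Proof.
move=> L0 r0' nn0 fsy HE al yv H1 H2.
have k0 : nn + 1 != 0 by rewrite gt_eqF // ltr_wpDl.
have D0 : 2 + nn ^+ 2 / (nn + 1) != 0.
  by rewrite gt_eqF // ltr_wpDr // ?divr_ge0 ?sqr_ge0 ?addr_ge0.
have D0' : nn ^+ 2 + 2 * nn + 2 != 0.
  by rewrite gt_eqF // ltr_wpDl // addr_ge0 // ?sqr_ge0 // mulr_ge0.
have alE : al = nn ^+ 2 / (nn ^+ 2 + 2 * nn + 2).
  by rewrite /al; field; rewrite k0 D0' /=.
set A := (4 * L * r ^+ 2)^-1.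
have A0 : 0 < A by rewrite invr_gt0 !mulr_gt0 // exprn_gt0.
have L0' : L != 0 by rewrite gt_eqF.
have r0'' : r != 0 by rewrite gt_eqF.
set u := yv - r0. set w := yv - p.
have Hu : fy - fs <= u by rewrite /u; lra.
have Hw : fy - fx <= w by rewrite /w; lra.
have Id : 2 * (nn + 1) * (q - r0) = 2 * (nn + 1) * u + nn ^+ 2 * w.
  by rewrite /u /w /yv alE; field.
rewrite -subr_ge0.
have -> : nn ^+ 2 * A * (fx - fs) + 1/2 * Z -
  ((nn + 1) ^+ 2 * A * (fy - fs - (L * r)^-1 * P + L / 2 * (L * r)^-1 ^+ 2 * E)
  + 1/2 * (Z - 2 * ((L * r ^+ 2)^-1 * ((nn + 1) / 2)) * (q - r0)
           + ((L * r ^+ 2)^-1 * ((nn + 1) / 2)) ^+ 2 * E))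
  = A * (nn ^+ 2 * (fx - fs) - (nn + 1) ^+ 2 * (fy - fs) + 2 * (nn + 1) * (q - r0)
         + 4 * (nn + 1) ^+ 2 * A * (r * P - E)).
  by rewrite /A; field; rewrite ?L0' ?r0'' ?k0.
apply: mulr_ge0; first exact: ltW.
rewrite Id.
have h1 : 2 * (nn + 1) * (fy - fs) <= 2 * (nn + 1) * u.
  by rewrite ler_wpM2l // mulr_ge0 // addr_ge0.
have h2 : nn ^+ 2 * (fy - fx) <= nn ^+ 2 * w by rewrite ler_wpM2l // sqr_ge0.
have h3 : 0 <= 4 * (nn + 1) ^+ 2 * A * (r * P - E).
  apply: mulr_ge0; last by rewrite subr_ge0.
  have hA := ltW A0; have hk := sqr_ge0 (nn + 1).
  by apply: mulr_ge0 => //; apply: mulr_ge0.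
lra.
Qed.
End Scalar.

Section Step.
Variables (R : realType) (d N K : nat).
Local Notation vec := 'rV[R]_d.
Local Notation set_ := {set 'I_N}.
Local Notation M := (Msum R N K).
Hypothesis N2 : (2 <= N)%N.
Hypothesis K1 : (1 <= K <= N)%N.

Lemma avg_lin (c0 c1 c2 c3 : R) (X Y W : set_ -> R) :
  M^-1 * \sum_(B : set_ | #|B| == K) (c0 + c1 * X B + c2 * Y B + c3 * W B) =
  c0 + c1 * (M^-1 * \sum_(B : set_ | #|B| == K) X B)
     + c2 * (M^-1 * \sum_(B : set_ | #|B| == K) Y B)
     + c3 * (M^-1 * \sum_(B : set_ | #|B| == K) W B).
Proof.
rewrite !big_split /= -!mulr_sumr.
have -> : \sum_(B : set_ | #|B| == K) c0 = c0 * M.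
  by rewrite /Msum mulr_sumr; apply: eq_bigr => B _; rewrite mulr1.
have M0 : M != 0 by rewrite gt_eqF // Msum_gt0.
by field.
Qed.

Lemma avg_le (X Y : set_ -> R) : (forall B, X B <= Y B) ->
  M^-1 * \sum_(B : set_ | #|B| == K) X B <= M^-1 * \sum_(B : set_ | #|B| == K) Y B.
Proof.
move=> H; rewrite ler_wpM2l ?ler_sum // invr_ge0 ltW // Msum_gt0 //.
Qed.

Variables (f : vec -> R) (g : vec -> vec) (L r : R) (xs : vec).
Hypothesis L0 : 0 < L.
Hypothesis r0 : 0 < r.
Hypothesis desc : forall y h, f (h + y) <= f y + dot (g y) h + L / 2 * dot h h.
Hypothesis conv : forall x y, f y + dot (g y) (x - y) <= f x.
Hypothesis fmin : forall x, f xs <= f x.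

Lemma lyap_step (n : nat) (x z : vec) (gB : set_ -> vec) :
  let al := (n%:R ^+ 2 / (n + 1)%:R) / (2 + n%:R ^+ 2 / (n + 1)%:R) in
  let y := al *: x + (1 - al) *: z in
  let s := (L * r)^-1 in
  let eta := (L * r ^+ 2)^-1 * ((n + 1)%:R / 2) in
  (forall w, M^-1 * \sum_(B : set_ | #|B| == K) dot (gB B) w = dot (g y) w) ->
  M^-1 * \sum_(B : set_ | #|B| == K) dot (gB B) (gB B) <= r * dot (g y) (g y) ->
  M^-1 * \sum_(B : set_ | #|B| == K)
     ((n.+1)%:R ^+ 2 * (4 * L * r ^+ 2)^-1 * (f (y - s *: gB B) - f xs)
      + 1/2 * dot (1 *: z + (1 - 1) *: y - eta *: gB B - xs)
                  (1 *: z + (1 - 1) *: y - eta *: gB B - xs))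
  <= n%:R ^+ 2 * (4 * L * r ^+ 2)^-1 * (f x - f xs) + 1/2 * dot (z - xs) (z - xs).
Proof.
move=> al y s eta Hmean Hvar.
set a := (n.+1)%:R ^+ 2 * (4 * L * r ^+ 2)^-1.
set wz := z - xs.
have ha : 0 <= a by rewrite /a mulr_ge0 ?sqr_ge0 // invr_ge0 !mulr_ge0 // ?ltW // exprn_ge0 // ltW.
apply: le_trans (avg_le (Y := fun B =>
   (a * (f y - f xs) + 1/2 * dot wz wz) + (- (a * s)) * dot (gB B) (g y)
   + (- eta) * dot (gB B) wz + (a * (L / 2 * s ^+ 2) + 1/2 * eta ^+ 2) * dot (gB B) (gB B)) _) _.
  move=> B.
  have e1 : 1 *: z + (1 - 1) *: y - eta *: gB B - xs = wz - eta *: gB B.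
    by rewrite scale1r subrr scale0r addr0 /wz addrAC.
  have E2 : dot (wz - eta *: gB B) (wz - eta *: gB B) =
     dot wz wz - 2 * eta * dot (gB B) wz + eta ^+ 2 * dot (gB B) (gB B).
    by rewrite !dotBl !dotBr !dotZl !dotZr (dotC z (gB B)) (dotC xs (gB B)); ring.
  rewrite e1 E2.
  have Hd : f (y - s *: gB B) <= f y - s * dot (g y) (gB B) + L / 2 * s ^+ 2 * dot (gB B) (gB B).
    have := desc y (- (s *: gB B)); rewrite addrC !dotNr !dotNl !dotZr !dotZl opprK.
    move=> H; apply: (le_trans H); rewrite le_eqVlt; apply/orP; left; apply/eqP; ring.
  have Ha := ler_wpM2l ha Hd.
  rewrite (dotC (gB B) (g y)); lra.
rewrite avg_lin !Hmean.
have cast1 : (n.+1)%:R = n%:R + 1 :> R by rewrite -addn1 natrD.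
have cast2 : (n + 1)%:R = n%:R + 1 :> R by rewrite natrD.
have nn0 : 0 <= n%:R :> R by [].
have fsy := fmin y.
have H1 := conv x y.
have H2 := conv xs y.
have ey : dot (g y) y = al * dot (g y) x + (1 - al) * dot (g y) z.
  by rewrite /y dotDr !dotZr.
rewrite dotBr ey in H1; rewrite dotBr ey in H2.
rewrite /al cast2 in H1 H2.
have S := @scalar_step R _ _ _ _ _ _ _ _ _ _ _ (dot wz wz) L0 r0 nn0 fsy Hvar H1 H2.
apply: le_trans S.
rewrite /a /s /eta cast1 cast2 /wz !dotBr.
rewrite le_eqVlt; apply/orP; left; apply/eqP.
have L0' : L != 0 by rewrite gt_eqF.
have r0' : r != 0 by rewrite gt_eqF.
have M0 : M != 0 by rewrite gt_eqF // Msum_gt0.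
by field; rewrite M0 L0' r0'.
Qed.
End Step.

Lemma favg_deriv (R : realType) (d N : nat) (F : 'I_N -> 'rV[R]_d -> R)
  (G : 'I_N -> 'rV[R]_d -> 'rV[R]_d) :
  (forall i, is_gradient (F i) (G i)) ->
  forall x h, derivable (favg F) x h /\ 'D_h (favg F) x = dot (gavg G x) h.
Proof.
move=> HG x h.
have Ef : favg F = (N%:R^-1) \*: (\sum_(i < N) F i).
  by apply: funext => y; rewrite /favg /= fct_sumE.
have dF : forall i, derivable (F i) x h.
  by move=> i; apply: diff_derivable; exact: (HG i x).1.
have dS : derivable (\sum_(i < N) F i) x h by exact: derivable_sum.
rewrite Ef; split; first exact: derivableZ.
rewrite deriveZ // derive_sum // /gavg dotZl dot_suml.
congr (_ * _); apply: eq_bigr => i _.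
by rewrite deriveE ?(HG i x).2 //; exact: (HG i x).1.
Qed.

Lemma snag_congr (R : realType) (d N : nat) (G : 'I_N -> 'rV[R]_d -> 'rV[R]_d)
  K s beta alpha eta x0 (bs bs' : nat -> {set 'I_N}) n :
  (forall j, (j < n)%N -> bs j = bs' j) ->
  snag G K s beta alpha eta x0 bs n = snag G K s beta alpha eta x0 bs' n.
Proof.
elim: n => [//|n IH] H /=.
rewrite IH; last by move=> j jn; apply: H; exact: ltnW.
by rewrite H.
Qed.

Lemma snag_ext (R : realType) (d N : nat) (G : 'I_N -> 'rV[R]_d -> 'rV[R]_d)
  K s beta alpha eta x0 (bs : nat -> {set 'I_N}) n B :
  snag G K s beta alpha eta x0 (ext n bs B) n.+1 =
  let: (x, z) := snag G K s beta alpha eta x0 bs n in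
  let y := alpha n *: x + (1 - alpha n) *: z in
  let gy := batch_grad G K B y in
  (y - s *: gy, beta *: z + (1 - beta) *: y - eta n *: gy).
Proof.
rewrite /= (@snag_congr _ _ _ _ _ _ _ _ _ _ _ bs); last by move=> j jn; rewrite /ext jn.
by rewrite /ext ltnn eqxx.
Qed.

Theorem theorem5 (R : realType) (d N : nat) (F : 'I_N -> 'rV[R]_d -> R)
  (G : 'I_N -> 'rV[R]_d -> 'rV[R]_d) (L rho1 : R) (xstar : 'rV[R]_d) (K : nat) :
  (2 <= N)%N ->
  (forall i, is_gradient (F i) (G i)) ->
  (forall i, continuous (G i)) ->
  convex_fun (favg F) ->
  0 < L -> lipschitz_grad L (gavg G) ->
  (forall x, favg F xstar <= favg F x) ->
  1 <= rho1 -> strong_growth1 G rho1 ->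
  (1 <= K <= N)%N ->
  let rhoK := (rho1 * (N - K)%:R + (K - 1)%:R * N%:R) / (K%:R * (N - 1)%:R) in
  let s := (L * rhoK)^-1 in
  let eta := fun n : nat => (L * rhoK ^+ 2)^-1 * ((n + 1)%:R / 2) in
  let beta := 1 in
  let alpha := fun n : nat =>
    (n%:R ^+ 2 / (n + 1)%:R) / (2 + n%:R ^+ 2 / (n + 1)%:R) in
  let DeltaK := (N - K)%:R / (N - 1)%:R + N%:R / rho1 * ((K - 1)%:R / (N - 1)%:R) in
  forall (x0 : 'rV[R]_d) (eps : R) (n : nat), 0 < eps ->
    DeltaK * rho1 * Num.sqrt (2 * L / eps) * enorm (x0 - xstar) <= (n * K)%:R ->
    Exp_batches K n
      (fun bs => favg F (snag G K s beta alpha eta x0 bs n).1 - favg F xstar)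
      <= eps.
Proof.
move=> N2 HG Gc fconv L0 Lip fmin rho1ge SG K1 rhoK s eta beta alpha DeltaK x0 eps n eps0 Hn.

have fD := favg_deriv HG.
have desc := @descent _ _ _ _ fD L L0 Lip.
have conv := conv_first fD fconv.
have K1c := K1; case/andP: K1c => K1' KN.
have Kp : (0 < K%:R :> R) by rewrite ltr0n.
have Nr : (2%:R <= N%:R :> R) by rewrite ler_nat.
have Kr : (K%:R <= N%:R :> R) by rewrite ler_nat.
have Kr1 : (1 <= K%:R :> R) by rewrite ler1n.
have rK0 : 0 < rhoK.
  rewrite /rhoK !natrB // ?(ltn_trans _ N2) //.
  apply: divr_gt0; last by rewrite mulr_gt0 // subr_gt0 (lt_le_trans _ Nr) // ltr_nat.
  have h1 : 0 <= (rho1 - 1) * (N%:R - K%:R) by rewrite mulr_ge0 // subr_ge0.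
  nra.
set A := (4 * L * rhoK ^+ 2)^-1.
pose V (m : nat) (bs : nat -> {set 'I_N}) :=
  m%:R ^+ 2 * A * (favg F (snag G K s beta alpha eta x0 bs m).1 - favg F xstar)
  + 1/2 * dot ((snag G K s beta alpha eta x0 bs m).2 - xstar)
              ((snag G K s beta alpha eta x0 bs m).2 - xstar).
have Vb : forall m, Exp_batches K m (V m) <= 1/2 * dot (x0 - xstar) (x0 - xstar).
  elim => [|m IH].
    by rewrite Exp_0 /V /= expr0n /= !mul0r add0r.
  rewrite (Exp_S K1); apply: le_trans IH; apply: (Exp_le K1) => bs.
  rewrite /V; under eq_bigr do rewrite snag_ext.
  case E: (snag G K s beta alpha eta x0 bs m) => [x z] /=.
  have Hm := fun w => batch_mean (d := d) N2 K1 (fun i => G i (alpha m *: x + (1 - alpha m) *: z)) w.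
  have Hv := @batch_var R d N K N2 K1 (fun i => G i (alpha m *: x + (1 - alpha m) *: z)) rho1.
  apply: (@lyap_step R d N K K1 (favg F) (gavg G) L rhoK xstar L0 rK0 desc conv fmin m x z
    (fun B => batch_grad G K B (alpha m *: x + (1 - alpha m) *: z))).
    exact: Hm.
  apply: Hv.
  have := SG (alpha m *: x + (1 - alpha m) *: z).
  by under eq_bigr do rewrite enorm_sq; rewrite enorm_sq.
have rho0 : rho1 != 0 by rewrite gt_eqF // (lt_le_trans ltr01).
have N1 : (N - 1)%:R != 0 :> R by rewrite pnatr_eq0 subn_eq0 -ltnNge.
have K0 : K%:R != 0 :> R by rewrite gt_eqF.
have DKr : DeltaK * rho1 = K%:R * rhoK.
  by rewrite /DeltaK /rhoK; field; rewrite rho0 N1 K0.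
set e := enorm (x0 - xstar).
set sq := Num.sqrt (2 * L / eps).
have e0 : 0 <= e := enorm_ge0 _.
have sq0 : 0 < sq by rewrite sqrtr_gt0 divr_gt0 // mulr_gt0.
clearbody s eta beta alpha DeltaK rhoK.
have Hn' : rhoK * sq * e <= n%:R.
  rewrite DKr natrM in Hn.
  move: Hn; rewrite -/sq -/e => Hn.
  by rewrite -(ler_pM2l Kp) [K%:R * n%:R]mulrC !mulrA.
case: n Hn Hn' Vb => [|n] Hn Hn' Vb.
  have ez : e = 0.
    apply/eqP; rewrite eq_le e0 andbT.
    have : 0 <= rhoK * sq * e by rewrite !mulr_ge0 // ltW.
    move: Hn'; rewrite mulr0n => Hn' H0.
    have H1 : rhoK * sq * e = 0 by apply/eqP; rewrite eq_le Hn' H0.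
    move/eqP: H1; rewrite !mulf_eq0 (gt_eqF rK0) (gt_eqF sq0) /= => /eqP ->.
    exact: lexx.
  have xe : x0 = xstar.
    apply/eqP; rewrite -subr_eq0; apply/eqP; apply: dot_eq0.
    by rewrite -enorm_sq -/e ez expr0n.
  by rewrite Exp_0 /= xe subrr ltW.
have A0 : 0 < A by rewrite invr_gt0 !mulr_gt0 // exprn_gt0.
have c0 : 0 < (n.+1)%:R ^+ 2 * A by rewrite mulr_gt0 // exprn_gt0.
set c := (n.+1)%:R ^+ 2 * A.
have cn0 : c != 0 by rewrite gt_eqF.
apply: (@le_trans _ _ (Exp_batches K n.+1 (fun bs => c^-1 * V n.+1 bs))).
  apply: (Exp_le K1) => bs; rewrite /V -/c mulrDr mulKf // lerDl.
  by apply: mulr_ge0; [rewrite invr_ge0 ltW | apply: mulr_ge0; [|exact: dot_ge0]].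
rewrite Exp_scale.
have ci : 0 <= c^-1 by rewrite invr_ge0 ltW.
apply: le_trans (ler_wpM2l ci (Vb n.+1)) _.
rewrite -enorm_sq -/e.
have Hsq : sq ^+ 2 = 2 * L / eps by rewrite sqr_sqrtr // ltW // divr_gt0 // mulr_gt0.
have H2 : (rhoK * sq * e) ^+ 2 <= (n.+1)%:R ^+ 2.
  by rewrite !expr2 ler_pM // !mulr_ge0 // ltW.
have ep0 : eps != 0 by rewrite gt_eqF.
have L0' : L != 0 by rewrite gt_eqF.
have r0' : rhoK != 0 by rewrite gt_eqF.
have n0 : (n.+1)%:R != 0 :> R by rewrite pnatr_eq0.
have -> : c^-1 * (1/2 * e ^+ 2) = eps * (rhoK * sq * e) ^+ 2 / (n.+1)%:R ^+ 2.
  rewrite !exprMn Hsq /c /A; field.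
  have n1 : 1 + n%:R != 0 :> R by rewrite gt_eqF // ltr_pwDl.
  by rewrite n1 ep0 r0' L0'.
rewrite ler_pdivrMr ?exprn_gt0 // ?ltr0n //.
by rewrite ler_wpM2l // ltW.
Qed.
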